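(* Let $\ell\ge1$ and $V=\prod_{j=\ell,\dots,2,1}(c_1x^jy^jc_2)^2$. Suppose $C$ is an accepting computation of $V$ that does not completely match the first occurrence of the subword $v_\ell=c_1x^\ell y^\ell c_2$ of $V$ with the second occurrence of $v_\ell$ (i.e., at least one symbol of the second occurrence of $v_\ell$ is pushed onto the queue). Then at some point during $C$ the queue contains two full $x$-blocks or two full $y$-blocks.
   Context: Queue automaton: a configuration is written $Q\,\|\,x$ ($Q$ = queue contents, $x$ = remaining input); a step from $Q\,\|\,\sigma x$ ($\sigma$ a symbol) goes either to $Q\sigma\,\|\,x$ (push the input symbol) or, if $Q=\sigma Q'$, to $Q'\,\|\,x$ (the input symbol is matched against the leftmost queue symbol, which is popped; that queue symbol was pushed from an earlier input position and the two occurrences are said to be matched). An accepting computation of $w$ is a computation $\varepsilon\,\|\,w\vdash^*\varepsilon\,\|\,\varepsilon$ ($\varepsilon$ the empty string). Here $c_1,c_2,x,y$ are four distinct symbols and $V=v_\ell v_\ell v_{\ell-1}v_{\ell-1}\cdots v_1v_1$ with $v_j=c_1x^jy^jc_2$. Each displayed subword $x^j$ of $V$ is an $x$-block and each displayed $y^j$ a $y$-block. At a given point of a computation, the queue contains a full $x$-block (resp. $y$-block) if the entire block $x^j$ (resp. $y^j$) of $V$ has been pushed onto the queue, with none of its symbols matched when read, and none of its symbols has yet been popped. *)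

(* Defs.v *)
From HB Require Import structures.
From mathcomp Require Import all_boot.
Set Implicit Arguments. Unset Strict Implicit. Unset Printing Implicit Defensive.

Inductive sym := c1 | c2 | sx | sy.

Definition sym_eqb (a b : sym) : bool :=
  match a, b with
  | c1, c1 | c2, c2 | sx, sx | sy, sy => true
  | _, _ => false
  end.

Lemma sym_eqP : Equality.axiom sym_eqb.
Proof. by case; case; constructor. Qed.

HB.instance Definition _ := hasDecEq.Build sym sym_eqP.

Definition vword (j : nat) : seq sym := c1 :: nseq j sx ++ nseq j sy ++ [:: c2].

Definition factors (l : nat) : seq nat :=
  flatten [seq [:: j; j] | j <- rev (iota 1 l)].

Definition Vword (l : nat) : seq sym := flatten [seq vword j | j <- factors l].

(* position (0-based) in V where the k-th factor (0-based) starts *)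
Definition foff (l k : nat) : nat := sumn [seq size (vword j) | j <- take k (factors l)].

Definition xblock (l k : nat) : seq nat :=
  iota (foff l k).+1 (nth 0 (factors l) k).
Definition yblock (l k : nat) : seq nat :=
  iota ((foff l k).+1 + nth 0 (factors l) k) (nth 0 (factors l) k).

(* Queue automaton configurations, annotated with input positions:
   (Q, n) stands for the configuration  map (nth c1 w) Q || drop n w ,
   where Q lists the input positions whose symbols are in the queue
   (leftmost first) and n is the number of input symbols already read. *)
Definition config := (seq nat * nat)%type.

Definition qstep (w : seq sym) (c d : config) : bool :=
  let: (Q, n) := c in
  (n < size w) &&
  ((d == (rcons Q n, n.+1))
   || (match Q with
       | j :: Q' => (nth c1 w j == nth c1 w n) && (d == (Q', n.+1))
       | [::] => false
       end)).

Definition init_config : config := ([::], 0).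

(* cs is the list of configurations after the initial one *)
Definition accepting_computation (w : seq sym) (cs : seq config) : bool :=
  path (qstep w) init_config cs && (last init_config cs == ([::], size w)).

Definition full_block (c : config) (b : seq nat) : Prop := {subset b <= c.1}.

(* Main.v *)
Require Import Defs.
From mathcomp Require Import all_boot zify.
Set Implicit Arguments. Unset Strict Implicit.


Section Run.
Variable w : seq sym.
Variable N : nat.
Variable Q : nat -> seq nat.
Hypothesis Q0 : Q 0 = [::].
Hypothesis Hst : forall t, t < N -> Q t.+1 = rcons (Q t) t \/
  exists j Q', [/\ Q t = j :: Q', nth c1 w j = nth c1 w t & Q t.+1 = Q'].

Definition pb t := size (Q t.+1) == (size (Q t)).+1.

Lemma step_push t : t < N -> pb t -> Q t.+1 = rcons (Q t) t.
Proof.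
move=> tN; rewrite /pb; case: (Hst tN) => // [[j [Q' [E1 _ E2]]]].
by rewrite E1 E2 /=; lia.
Qed.

Lemma step_pop t : t < N -> ~~ pb t ->
  exists j Q', [/\ Q t = j :: Q', nth c1 w j = nth c1 w t & Q t.+1 = Q'].
Proof.
move=> tN; rewrite /pb; case: (Hst tN) => // E.
by rewrite E size_rcons eqxx.
Qed.

Lemma mem_pushed t p : t <= N -> p \in Q t -> p < t /\ pb p.
Proof.
elim: t => [|t IH] tN; first by rewrite Q0.
have tN' : t < N by [].
case pt: (pb t).
  rewrite (step_push tN' pt) mem_rcons inE => /orP [/eqP -> //|].
  by move=> /(IH (ltnW tN')) [? ?]; split=> //; lia.
have [j [Q' [E1 _ E2]]] := step_pop tN' (negbT pt).
rewrite E2 => pQ'.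
have /(IH (ltnW tN')) [? ?] : p \in Q t by rewrite E1 inE pQ' orbT.
by split=> //; lia.
Qed.

Lemma persist_back p t t' : p < t -> t <= t' -> t' <= N -> p \in Q t' -> p \in Q t.
Proof.
move=> pt; elim: t' => [|t' IH] tt' tN.
  by have -> : t = 0 by lia.
case: (eqVneq t t'.+1) => [-> //|ne].
have tt2 : t <= t' by move/eqP: ne; lia.
move=> pQ; apply: IH => //; first by lia.
have tN' : t' < N by [].
case pt': (pb t').
  move: pQ; rewrite (step_push tN' pt') mem_rcons inE => /orP [/eqP E|//].
  lia.
have [j [Q' [E1 _ E2]]] := step_pop tN' (negbT pt').
by move: pQ; rewrite E2 E1 inE => ->; rewrite orbT.
Qed.

Lemma pops n t : n <= t -> t <= N -> (forall t', n <= t' < t -> ~~ pb t') ->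
  Q t = drop (t - n) (Q n).
Proof.
move=> + tN; elim: t tN => [|t IH] tN nt H.
  have -> : n = 0 by lia.
  by rewrite drop0.
case: (eqVneq n t.+1) => [-> |ne]; first by rewrite subnn drop0.
have nt' : n <= t by lia.
have tN' : t < N by [].
have [j [Q' [E1 _ E2]]] := step_pop tN' (H t (ltac:(lia))).
rewrite E2.
have := IH (ltnW tN') nt' (fun t' h => H t' (ltac:(lia))).
rewrite E1 => E3.
have -> : t.+1 - n = 1 + (t - n) by lia.
by rewrite -drop_drop -E3 /= drop0.
Qed.

Lemma count_take_mono (T : Type) (a : pred T) i j (s : seq T) : i <= j ->
  count a (take i s) <= count a (take j s).
Proof.
move=> ij; rewrite -(take_takel s ij) -{2}(cat_take_drop i (take j s)) count_cat.
exact: leq_addr.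
Qed.

Lemma block n m k s : n <= m -> m <= N -> k < size (Q n) ->
  count_mem s (map (nth c1 w) (iota n (m - n))) <
  count_mem s (map (nth c1 w) (take k.+1 (Q n))) ->
  exists d, [/\ d <= k,
    Q m = drop d (Q n) ++ [seq t <- iota n (m - n) | pb t] &
    forall t', n <= t' < m -> nth c1 w t' \notin map (nth c1 w) (take k.+1 (Q n)) -> pb t'].
Proof.
move=> nm mN kQ Hc.
suff: exists d, [/\ d <= k,
    Q m = drop d (Q n) ++ [seq t <- iota n (m - n) | pb t],
    count_mem s (map (nth c1 w) (take d (Q n))) <= count_mem s (map (nth c1 w) (iota n (m - n))) &
    forall t', n <= t' < m -> nth c1 w t' \notin map (nth c1 w) (take k.+1 (Q n)) -> pb t'].
  by move=> [d [? ? ? ?]]; exists d.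
move: Hc; elim: m nm mN => [|m IH] nm mN Hc.
  have n0 : n = 0 by lia.
  by exists 0; rewrite n0 /= drop0 cats0 take0; split=> // t'; lia.
case: (eqVneq n m.+1) => [<- |ne].
  by exists 0; rewrite subnn /= drop0 cats0 take0; split=> // t'; lia.
have nm' : n <= m by lia.
have mN' : m < N by [].
have Eio : iota n (m.+1 - n) = rcons (iota n (m - n)) m.
  have -> : m.+1 - n = (m - n) + 1 by lia.
  by rewrite iotaD -cats1 /=; congr (_ ++ [:: _]); lia.
have Hc' : count_mem s (map (nth c1 w) (iota n (m - n))) <
           count_mem s (map (nth c1 w) (take k.+1 (Q n))).
  apply: leq_ltn_trans Hc; rewrite Eio map_rcons -cats1 count_cat; exact: leq_addr.
have [d [dk E cnt frc]] := IH nm' (ltnW mN') Hc'.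
case pm: (pb m).
  exists d; split=> //.
  - by rewrite (step_push mN' pm) E Eio filter_rcons pm rcons_cat.
  - rewrite Eio map_rcons -cats1 count_cat; apply: leq_trans cnt _; exact: leq_addr.
  - move=> t' /andP [h1 h2]; case: (eqVneq t' m) => [-> //|ne' ]; apply: frc; lia.
have [j [Q' [E1 E2 E3]]] := step_pop mN' (negbT pm).
have dQ : d < size (Q n) by lia.
have Ed : drop d (Q n) = nth 0 (Q n) d :: drop d.+1 (Q n).
  by rewrite (drop_nth 0 dQ).
move: E1; rewrite E Ed /= => -[Ej EQ'].
have cnt' : count_mem s (map (nth c1 w) (take d.+1 (Q n))) <=
            count_mem s (map (nth c1 w) (iota n (m.+1 - n))).
  rewrite (take_nth 0 dQ) Eio !map_rcons -!cats1 !count_cat Ej E2.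
  by apply: leq_add.
have dk' : d.+1 <= k.
  rewrite ltnNge; apply/negP => kd.
  have h : count_mem s (map (nth c1 w) (take k.+1 (Q n))) <=
           count_mem s (map (nth c1 w) (take d.+1 (Q n))).
    by rewrite !map_take; apply: count_take_mono.
  have := leq_trans h cnt'; rewrite leqNgt Hc //.
exists d.+1; split=> //.
- by rewrite E3 -EQ' Eio filter_rcons pm.
- move=> t' /andP [h1 h2]; case: (eqVneq t' m) => [-> |ne']; last by apply: frc; lia.
  move/negP; case; rewrite -E2 -Ej; apply: map_f.
  have dk1 : d < k.+1 by lia.
  rewrite -(nth_take 0 dk1); apply: mem_nth.
  by rewrite size_take; case: ifP => _.
Qed.

End Run.

Lemma size_vword j : size (vword j) = j.*2.+2.
Proof. rewrite /vword /= !size_cat !size_nseq /= -addnn; lia. Qed.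

Lemma factors_S n : factors n.+1 = n.+1 :: n.+1 :: factors n.
Proof.
rewrite /factors; have -> : iota 1 n.+1 = rcons (iota 1 n) n.+1.
  by rewrite -cats1 -(addn1 n) iotaD (addnC 1 n).
by rewrite rev_rcons.
Qed.

Lemma Vword_S n : Vword n.+1 = vword n.+1 ++ vword n.+1 ++ Vword n.
Proof. by rewrite /Vword factors_S. Qed.

Lemma vsym_x j p : 1 <= p <= j -> nth c1 (vword j) p = sx.
Proof.
case: p => // p /andP [_ h]; rewrite /vword /= nth_cat size_nseq h nth_nseq h //.
Qed.

Lemma vsym_y j p : j < p <= j.*2 -> nth c1 (vword j) p = sy.
Proof.
case: p => [|p] h; first by lia.
rewrite /vword /= nth_cat size_nseq ifN; last by lia.
rewrite nth_cat size_nseq ifT; last by lia.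
by rewrite nth_nseq ifT //; lia.
Qed.

Lemma vsym_c2 j : nth c1 (vword j) j.*2.+1 = c2.
Proof.
rewrite /vword /= nth_cat size_nseq ifN; last by lia.
by rewrite nth_cat size_nseq ifN; [have -> : j.*2 - j - j = 0 by lia|lia].
Qed.

Lemma vsym_0 j : nth c1 (vword j) 0 = c1.
Proof. by []. Qed.

Lemma vsym_nx j p : (p == 0) || (j < p) -> nth c1 (vword j) p != sx.
Proof.
case: p => [|p] h //.
rewrite /vword /= nth_cat size_nseq ifN; last by lia.
rewrite nth_cat size_nseq; case: ifP => _; first by rewrite nth_nseq; case: ifP.
by case: (p - j - j) => [|[]].
Qed.

Lemma vsym_nc1 j p : 1 <= p <= j.*2.+1 -> nth c1 (vword j) p != c1.
Proof.
case: p => [|p] h //.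
rewrite /vword /= nth_cat size_nseq; case: ifP => H1; first by rewrite nth_nseq H1.
rewrite nth_cat size_nseq; case: ifP => H2; first by rewrite nth_nseq H2.
by have -> : p - j - j = 0 by lia.
Qed.

Lemma vsym_nc2 j p : p <= j.*2 -> nth c1 (vword j) p != c2.
Proof.
case: p => [|p] h //.
rewrite /vword /= nth_cat size_nseq; case: ifP => H1; first by rewrite nth_nseq H1.
rewrite nth_cat size_nseq; case: ifP => H2; first by rewrite nth_nseq H2.
lia.
Qed.

Lemma Vsym0 n p : p < n.+1.*2.+2 -> nth c1 (Vword n.+1) p = nth c1 (vword n.+1) p.
Proof. by move=> h; rewrite Vword_S nth_cat size_vword h. Qed.

Lemma Vsym1 n p : n.+1.*2.+2 <= p < (n.+1.*2.+2).*2 ->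
  nth c1 (Vword n.+1) p = nth c1 (vword n.+1) (p - n.+1.*2.+2).
Proof.
move=> h; rewrite Vword_S nth_cat size_vword ifN; last by lia.
by rewrite nth_cat size_vword ifT //; lia.
Qed.

Lemma Vsym2 n p : (n.+1.*2.+2).*2 <= p ->
  nth c1 (Vword n.+1) p = nth c1 (Vword n) (p - (n.+1.*2.+2).*2).
Proof.
move=> h; rewrite Vword_S nth_cat size_vword ifN; last by lia.
rewrite nth_cat size_vword ifN; last by lia.
by congr nth; lia.
Qed.

Lemma size_Vword n : size (Vword n) = \sum_(0 <= i < n) ((i.+1).*2.+2).*2.
Proof.
elim: n => [|n IH]; first by rewrite big_geq.
by rewrite Vword_S !size_cat IH !size_vword big_nat_recr //= addnA addnC addnn.
Qed.

Definition cfg (cs : seq config) t := nth init_config (init_config :: cs) t.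

Lemma comp_facts w cs : accepting_computation w cs ->
  [/\ size cs = size w,
      (cfg cs 0).1 = [::], (cfg cs (size w)).1 = [::],
      (forall t, t <= size w -> (cfg cs t).2 = t) &
      (forall t, t < size w -> (cfg cs t.+1).1 = rcons (cfg cs t).1 t \/
         exists j Q', [/\ (cfg cs t).1 = j :: Q', nth c1 w j = nth c1 w t & (cfg cs t.+1).1 = Q'])].
Proof.
move=> /andP [/(pathP init_config) Hp /eqP Hl].
have Hsnd : forall t, t <= size cs -> (cfg cs t).2 = t.
  elim=> [|t IH] ht //.
  have := Hp t ht; rewrite -/(cfg cs t) -[nth _ cs t]/(cfg cs t.+1).
  case: (cfg cs t) (IH (ltnW ht)) => Qt nt /= ->.
  case: (cfg cs t.+1) => Qt' nt' /andP [_ /orP [/eqP [_ ->] //|]].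
  by case: Qt => // j Q' /andP [_ /eqP [_ ->]].
have Hsz : size cs = size w.
  move: Hl; rewrite (last_nth init_config) -/(cfg cs (size cs)) => E.
  by have := Hsnd _ (leqnn _); rewrite E.
split=> //.
- by rewrite -Hsz /cfg -last_nth Hl.
- by move=> t; rewrite -Hsz; apply: Hsnd.
move=> t ht.
have ht' : t < size cs by rewrite Hsz.
have := Hp t ht'; rewrite -/(cfg cs t) -[nth _ cs t]/(cfg cs t.+1).
have := Hsnd t (ltnW ht').
case: (cfg cs t) => Qt nt /= ->.
case: (cfg cs t.+1) => Qt' nt' /andP [_ /orP [/eqP [-> _] |]] /=; first by left.
case: Qt => // j Q' /andP [/eqP Ej /eqP [-> _]]; right; exists j, Q'; split=> //.
Qed.

Lemma cnt0 (f : nat -> sym) s X : (forall x, x \in X -> f x != s) -> count_mem s (map f X) = 0.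
Proof.
move=> H; apply/eqP; rewrite -leqn0 leqNgt -has_count; apply/negP => /hasP [y /mapP [x xX ->]] /eqP E.
by have := H x xX; rewrite E eqxx.
Qed.

Lemma cntall (f : nat -> sym) s X : (forall x, x \in X -> f x = s) -> count_mem s (map f X) = size X.
Proof.
move=> H; rewrite count_map -(size_map f) -count_predT count_map; apply: eq_in_count => x xX.
by rewrite /= H ?eqxx.
Qed.

Lemma cntle (f : nat -> sym) s X : count_mem s (map f X) <= size X.
Proof. by rewrite -(size_map f); apply: count_size. Qed.

Lemma cntpos (f : nat -> sym) s X x : x \in X -> f x = s -> 0 < count_mem s (map f X).
Proof. by move=> xX fx; rewrite -has_count; apply/hasP; exists (f x); [apply: map_f|rewrite fx /=]. Qed.

Opaque vword.
Lemma xb0 L : xblock L.+1 0 = iota 1 L.+1.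
Proof. by rewrite /xblock /foff factors_S. Qed.
Lemma xb1 L : xblock L.+1 1 = iota (L.+1.*2.+2).+1 L.+1.
Proof. by rewrite /xblock /foff factors_S /= size_vword ?addn0. Qed.
Lemma yb0 L : yblock L.+1 0 = iota (1 + L.+1) L.+1.
Proof. by rewrite /yblock /foff factors_S. Qed.
Lemma yb1 L : yblock L.+1 1 = iota ((L.+1.*2.+2).+1 + L.+1) L.+1.
Proof. by rewrite /yblock /foff factors_S /= size_vword ?addn0. Qed.
Lemma xb2 L : xblock L.+2 2 = iota (L.+2.*2.+2 + L.+2.*2.+2).+1 L.+1.
Proof. by rewrite /xblock /foff !factors_S /= size_vword ?addn0. Qed.
Lemma xb3 L : xblock L.+2 3 = iota (L.+2.*2.+2 + (L.+2.*2.+2 + L.+1.*2.+2)).+1 L.+1.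
Proof. by rewrite /xblock /foff !factors_S /= !size_vword ?addn0. Qed.
Lemma foff1 L : foff L.+1 1 = L.+1.*2.+2.
Proof. by rewrite /foff factors_S /= size_vword ?addn0. Qed.
Lemma foff2 L : foff L.+1 2 = L.+1.*2.+2 + L.+1.*2.+2.
Proof. by rewrite /foff factors_S /= size_vword take0 /= addn0. Qed.
Transparent vword.

Lemma final_part (w : seq sym) (N : nat) (Q : nat -> seq nat)
  (Hst' : forall t, t < N -> Q t.+1 = rcons (Q t) t \/
     exists j Q', [/\ Q t = j :: Q', nth c1 w j = nth c1 w t & Q t.+1 = Q'])
  (L' a : nat) (Ea : a = L'.+2.*2.+2)
  (HN : a + a + size (Vword L'.+1) = N)
  (F0 : forall p, p < a -> nth c1 w p = nth c1 (vword L'.+2) p)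
  (F1 : forall p, a <= p < a + a -> nth c1 w p = nth c1 (vword L'.+2) (p - a))
  (F2 : forall p, a + a <= p -> nth c1 w p = nth c1 (Vword L'.+1) (p - (a + a)))
  (Q' : seq nat) (QE2 : Q (a + a) = rcons Q' (a + a - 1))
  (inQ' : L'.+2.*2.+1 \in Q')
  (noX : forall x, x \in Q (a + a) -> nth c1 w x != sx) :
  exists t, [/\ t <= N, {subset xblock L'.+2 2 <= Q t} & {subset xblock L'.+2 3 <= Q t}].
Proof.
have HNb : a + a + (L'.+1.*2.+2 + L'.+2) <= N.
  by rewrite -HN Vword_S !size_cat !size_vword; lia.
have Htk : take (size Q').+1 (Q (a + a)) = Q (a + a) by rewrite QE2 -(size_rcons Q' (a + a - 1)) take_size.
have [d [dk QM frc]] : exists d, [/\ d <= size Q',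
    Q (a + a + (L'.+1.*2.+2 + L'.+2)) = drop d (Q (a + a)) ++
      [seq t <- iota (a + a) (a + a + (L'.+1.*2.+2 + L'.+2) - (a + a)) | pb Q t] &
    forall t', a + a <= t' < a + a + (L'.+1.*2.+2 + L'.+2) ->
      nth c1 w t' \notin map (nth c1 w) (take (size Q').+1 (Q (a + a))) -> pb Q t'].
  apply: (@block w N Q Hst' (a + a) _ (size Q') c2); try lia.
    by rewrite QE2 size_rcons.
  rewrite Htk QE2 map_rcons -cats1 count_cat /=.
  rewrite F1; last by lia.
  have -> : a + a - 1 - a = L'.+2.*2.+1 by lia.
  rewrite vsym_c2 eqxx addn0 -[nat_of_bool true]/1.
  have hpos : 0 < count_mem c2 (map (nth c1 w) Q').
    apply: (cntpos inQ'); rewrite F0; last by lia.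
    by rewrite vsym_c2.
  have -> : a + a + (L'.+1.*2.+2 + L'.+2) - (a + a) = L'.+1.*2.+1 + (1 + L'.+2) by lia.
  rewrite !iotaD !map_cat !count_cat.
  rewrite (@cnt0 _ _ (iota (a + a) L'.+1.*2.+1)); last first.
    move=> x; rewrite mem_iota => hx; rewrite F2; last by lia.
    rewrite Vsym0; last by lia.
    by apply: vsym_nc2; lia.
  rewrite (@cnt0 _ _ (iota (a + a + L'.+1.*2.+1 + 1) L'.+2)); last first.
    move=> x; rewrite mem_iota => hx; rewrite F2; last by lia.
    rewrite Vsym1; last by lia.
    by apply: vsym_nc2; lia.
  have := cntle (nth c1 w) c2 (iota (a + a + L'.+1.*2.+1) 1); rewrite size_iota; move=> h; rewrite add0n addn0 addn1 ltnS; exact: leq_trans h hpos.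
exists (a + a + (L'.+1.*2.+2 + L'.+2)); split; first by lia.
  rewrite xb2 -Ea => x; rewrite mem_iota => hx.
  rewrite QM mem_cat mem_filter mem_iota; apply/orP; right; apply/andP; split; last by lia.
  apply: frc; first by lia.
  rewrite Htk; apply/mapP => -[y hy].
  rewrite F2; last by lia.
  rewrite Vsym0; last by lia.
  rewrite vsym_x; last by lia.
  by move=> E; have := noX y hy; rewrite -E.
rewrite xb3 -Ea => x; rewrite mem_iota => hx.
rewrite QM mem_cat mem_filter mem_iota; apply/orP; right; apply/andP; split; last by lia.
apply: frc; first by lia.
rewrite Htk; apply/mapP => -[y hy].
rewrite F2; last by lia.
rewrite Vsym1; last by lia.
rewrite vsym_x; last by lia.
by move=> E; have := noX y hy; rewrite -E.
Qed.

Unset Implicit Arguments.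
Theorem lemma11 (l : nat) (cs : seq config) :
  1 <= l ->
  accepting_computation (Vword l) cs ->
  (exists2 c, c \in cs &
     exists2 p, foff l 1 <= p < foff l 2 & p \in c.1) ->
  exists2 c, c \in init_config :: cs &
    exists k1 k2, [/\ k1 < (2 * l)%N, k2 < (2 * l)%N, k1 <> k2 &
      (full_block c (xblock l k1) /\ full_block c (xblock l k2)) \/
      (full_block c (yblock l k1) /\ full_block c (yblock l k2))].
Proof.
case: l => [//|L] _ Hacc [c cin [p /andP [p1 p2] pc]].
have [Hsz Q0 QN Hsnd Hst] := comp_facts Hacc.
set w := Vword L.+1 in Hsz QN Hsnd Hst.
set N := size w in Hsz QN Hsnd Hst.
pose Q t := (cfg cs t).1.
have Hst' : forall t, t < N -> Q t.+1 = rcons (Q t) t \/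
  exists j Q', [/\ Q t = j :: Q', nth c1 w j = nth c1 w t & Q t.+1 = Q'] := Hst.
have Q0' : Q 0 = [::] := Q0.
have QN' : Q N = [::] := QN.
clear Hst Q0 QN.
have [a Ea] : {a | a = L.+1.*2.+2} by exists (L.+1.*2.+2).
have HN : a + a + size (Vword L) = N by rewrite /N /w Vword_S !size_cat !size_vword Ea addnA.
have F0 : forall p, p < a -> nth c1 w p = nth c1 (vword L.+1) p.
  by move=> q; rewrite /w Ea; apply: Vsym0.
have F1 : forall p, a <= p < a + a -> nth c1 w p = nth c1 (vword L.+1) (p - a).
  by move=> q hq; rewrite /w Ea Vsym1 // -Ea; lia.
have F2 : forall p, a + a <= p -> nth c1 w p = nth c1 (Vword L) (p - (a + a)).
  by move=> q hq; rewrite /w Vsym2 -Ea ?addnn //; lia.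
rewrite foff1 foff2 -Ea in p1 p2.
have Hcfg : forall t, t <= N -> cfg cs t = (Q t, t).
  by move=> t ht; rewrite /Q; move: (Hsnd t ht); case: (cfg cs t) => ? ? /= ->.
have Hmem : forall t, t <= N -> cfg cs t \in init_config :: cs.
  by move=> t ht; apply: mem_nth; rewrite /= Hsz.
have Gx : forall t k1 k2, t <= N -> k1 < 2 * L.+1 -> k2 < 2 * L.+1 -> k1 <> k2 ->
    {subset xblock L.+1 k1 <= Q t} -> {subset xblock L.+1 k2 <= Q t} ->
  exists2 c, c \in init_config :: cs &
    exists k1 k2, [/\ k1 < (2 * L.+1)%N, k2 < (2 * L.+1)%N, k1 <> k2 &
      (full_block c (xblock L.+1 k1) /\ full_block c (xblock L.+1 k2)) \/
      (full_block c (yblock L.+1 k1) /\ full_block c (yblock L.+1 k2))].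
  move=> t k1 k2 ht h1 h2 h3 s1 s2; exists (cfg cs t); first exact: Hmem.
  by exists k1, k2; split=> //; left; rewrite /full_block Hcfg.
have Gy : forall t k1 k2, t <= N -> k1 < 2 * L.+1 -> k2 < 2 * L.+1 -> k1 <> k2 ->
    {subset yblock L.+1 k1 <= Q t} -> {subset yblock L.+1 k2 <= Q t} ->
  exists2 c, c \in init_config :: cs &
    exists k1 k2, [/\ k1 < (2 * L.+1)%N, k2 < (2 * L.+1)%N, k1 <> k2 &
      (full_block c (xblock L.+1 k1) /\ full_block c (xblock L.+1 k2)) \/
      (full_block c (yblock L.+1 k1) /\ full_block c (yblock L.+1 k2))].
  move=> t k1 k2 ht h1 h2 h3 s1 s2; exists (cfg cs t); first exact: Hmem.
  by exists k1, k2; split=> //; right; rewrite /full_block Hcfg.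
have pp : pb Q p.
  move: cin => /(nthP init_config) [i hi ci].
  have hi' : i.+1 <= N by rewrite -Hsz.
  have := @mem_pushed w N Q Q0' Hst' i.+1 p hi'.
  by rewrite /Q -[cfg cs i.+1]/(nth _ cs i) ci => /(_ pc) [].
have N0 : 0 < N by lia.
have Q1 : Q 1 = [:: 0].
  case: (Hst' 0 N0) => [-> | [j [Q' [E _ _]]]]; first by rewrite Q0'.
  by rewrite Q0' in E.
have [d1 [d10 Qa frc1]] : exists d, [/\ d <= 0,
    Q a = drop d (Q 1) ++ [seq t <- iota 1 (a - 1) | pb Q t] &
    forall t', 1 <= t' < a -> nth c1 w t' \notin map (nth c1 w) (take 1 (Q 1)) -> pb Q t'].
  apply: (@block w N Q Hst' 1 a 0 c1); try lia; first by rewrite Q1.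
  rewrite Q1 cnt0 /=; first by rewrite F0 ?vsym_0 //; lia.
  move=> x; rewrite mem_iota => hx; rewrite F0; last by lia.
  by apply: vsym_nc1; lia.
have {}Qa : Q a = 0 :: iota 1 (a - 1).
  have E0 : d1 = 0 by lia.
  rewrite Qa Q1 E0 /=; congr (_ :: _); apply/all_filterP/allP => x; rewrite mem_iota => hx.
  apply: frc1; first by lia.
  rewrite Q1 /= inE F0; last by lia.
  by rewrite (F0 0) ?vsym_0; [apply: vsym_nc1|]; lia.
have aN : a < N by lia.
case pa: (pb Q a).
  have Qa1 : Q a.+1 = rcons (0 :: iota 1 (a - 1)) a by rewrite (step_push Hst' aN pa) Qa.
  have [d2 [d20 Q2a frc2]] : exists d, [/\ d <= 0,
    Q (a + a) = drop d (Q a.+1) ++ [seq t <- iota a.+1 (a + a - a.+1) | pb Q t] &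
    forall t', a.+1 <= t' < a + a -> nth c1 w t' \notin map (nth c1 w) (take 1 (Q a.+1)) -> pb Q t'].
    apply: (@block w N Q Hst' a.+1 (a + a) 0 c1); try lia; first by rewrite Qa1 size_rcons.
    rewrite Qa1 cnt0 /=; first by rewrite F0 ?vsym_0 //; lia.
    move=> x; rewrite mem_iota => hx; rewrite F1; last by lia.
    by apply: vsym_nc1; lia.
  have E0 : d2 = 0 by lia.
  apply: (Gx (a + a) 0 1); try lia.
    rewrite xb0 => x; rewrite mem_iota => hx.
    by rewrite Q2a E0 drop0 mem_cat Qa1 mem_rcons !inE mem_iota; apply/orP; left; apply/orP; right; apply/orP; right; lia.
  rewrite xb1 -Ea => x; rewrite mem_iota => hx.
  rewrite Q2a mem_cat mem_filter mem_iota; apply/orP; right; apply/andP; split; last by lia.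
  apply: frc2; first by lia.
  rewrite Qa1 /= inE F1; last by lia.
  by rewrite (F0 0) ?vsym_0 ?take0 /= ?orbF; [apply: vsym_nc1|]; lia.
have [j [Q' [Ea0 _ Ea1]]] := step_pop Hst' aN (negbT pa).
rewrite Qa in Ea0; case: Ea0 => _ EQ'.
have Qa1 : Q a.+1 = iota 1 (a - 1) by rewrite Ea1 -EQ'.
clear j Q' EQ' Ea1.
have exq : exists q, (a < q < a + a) && pb Q q.
  exists p; rewrite pp andbT.
  case: (eqVneq p a) => [E|/eqP ne]; first by rewrite E pa in pp.
  by apply/andP; split; lia.
case: (ex_minnP exq) => q /andP [/andP [q1 q2] pq] qmin.
have Qq : Q q = drop (q - a.+1) (Q a.+1).
  apply: (@pops w N Q Hst' a.+1 q); try lia.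
  move=> t' ht'; apply/negP => h.
  have := qmin t'; rewrite h andbT.
  have -> : a < t' < a + a by apply/andP; split; lia.
  move=> /(_ isT); lia.
have {}Qq : Q q = iota (q - a) (a - (q - a)).
  by rewrite Qq Qa1 drop_iota; congr iota; lia.
have qN : q < N by lia.
have Qq1 : Q q.+1 = rcons (iota (q - a) (a - (q - a))) q by rewrite (step_push Hst' qN pq) Qq.
case: (leqP (q - a) L.+1) => hi.
  have Htk : take (L.+1 - (q - a)).+1 (Q q.+1) = iota (q - a) (L.+1 - (q - a)).+1.
    rewrite Qq1 -cats1 takel_cat ?size_iota; last by lia.
    by rewrite take_iota; congr iota; lia.
  have [d [dk QE frc]] : exists d, [/\ d <= L.+1 - (q - a),
    Q (a + a - 1) = drop d (Q q.+1) ++ [seq t <- iota q.+1 (a + a - 1 - q.+1) | pb Q t] &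
    forall t', q.+1 <= t' < a + a - 1 -> nth c1 w t' \notin map (nth c1 w) (take (L.+1 - (q - a)).+1 (Q q.+1)) -> pb Q t'].
    apply: (@block w N Q Hst' q.+1 (a + a - 1) (L.+1 - (q - a)) sx); try lia.
      by rewrite Qq1 size_rcons size_iota; lia.
    rewrite Htk [X in _ < X]cntall; last first.
      move=> x; rewrite mem_iota => hx; rewrite F0; last by lia.
      by apply: vsym_x; lia.
    have -> : a + a - 1 - q.+1 = (a + L.+1 - q) + L.+1 by lia.
    rewrite iotaD map_cat count_cat (@cnt0 _ _ (iota (q.+1 + (a + L.+1 - q)) L.+1)); last first.
      move=> x; rewrite mem_iota => hx; rewrite F1; last by lia.
      by rewrite vsym_y //; lia.
    rewrite addn0 size_iota; apply: leq_ltn_trans (cntle _ _ _) _; rewrite size_iota; lia.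
  apply: (Gy (a + a - 1) 0 1); try lia.
    rewrite yb0 => x; rewrite mem_iota => hx.
    rewrite QE mem_cat Qq1 -cats1 drop_cat size_iota ifT; last by lia.
    by rewrite drop_iota mem_cat mem_iota; apply/orP; left; apply/orP; left; lia.
  rewrite yb1 -Ea => x; rewrite mem_iota => hx.
  rewrite QE mem_cat mem_filter mem_iota; apply/orP; right; apply/andP; split; last by lia.
  apply: frc; first by lia.
  rewrite Htk; apply/mapP => -[y]; rewrite mem_iota => hy.
  rewrite F1; last by lia.
  rewrite F0; last by lia.
  by rewrite vsym_y ?vsym_x //; lia.
have EN : a + a - 1 < N by lia.
have Hyc : exists Q', Q (a + a) = rcons Q' (a + a - 1) /\ L.+1.*2.+1 \in Q'.
  case: (eqVneq q (a + a - 1)) => [qE | /eqP qE].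
    exists (Q q); split.
      have -> : a + a = q.+1 by lia.
      by rewrite Qq1 Qq; congr rcons; lia.
    by rewrite Qq mem_iota; lia.
  have Htk : take (L.+1.*2 - (q - a)).+1 (Q q.+1) = iota (q - a) (L.+1.*2 - (q - a)).+1.
    rewrite Qq1 -cats1 takel_cat ?size_iota; last by lia.
    by rewrite take_iota; congr iota; lia.
  have [d [dk QE frc]] : exists d, [/\ d <= L.+1.*2 - (q - a),
    Q (a + a - 1) = drop d (Q q.+1) ++ [seq t <- iota q.+1 (a + a - 1 - q.+1) | pb Q t] &
    forall t', q.+1 <= t' < a + a - 1 -> nth c1 w t' \notin map (nth c1 w) (take (L.+1.*2 - (q - a)).+1 (Q q.+1)) -> pb Q t'].
    apply: (@block w N Q Hst' q.+1 (a + a - 1) (L.+1.*2 - (q - a)) sy); try lia.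
      by rewrite Qq1 size_rcons size_iota; lia.
    rewrite Htk [X in _ < X]cntall; last first.
      move=> x; rewrite mem_iota => hx; rewrite F0; last by lia.
      by apply: vsym_y; lia.
    apply: leq_ltn_trans (cntle _ _ _) _; rewrite !size_iota; lia.
  have Hd : drop d (Q q.+1) = (q - a + d) :: (iota (q - a + d).+1 (a - (q - a) - d - 1) ++ [:: q]).
    rewrite Qq1 -cats1 drop_cat size_iota ifT; last by lia.
    rewrite drop_iota; have -> : a - (q - a) - d = (a - (q - a) - d - 1).+1 by lia.
    by rewrite subSS subn0.
  have pE : pb Q (a + a - 1).
    apply/negPn/negP => h.
    have [j [Q' [E1 E2 _]]] := step_pop Hst' EN h.
    move: E1; rewrite QE Hd /= => -[Ej _].
    move: E2; rewrite -Ej F0; last by lia.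
    rewrite F1; last by lia.
    rewrite vsym_y; last by lia.
    have -> : a + a - 1 - a = L.+1.*2.+1 by lia.
    by rewrite vsym_c2.
  exists (Q (a + a - 1)); split.
    rewrite -(step_push Hst' EN pE); congr Q; lia.
  rewrite QE Hd mem_cat !inE mem_cat mem_iota; apply/orP; left; apply/orP; right.
  apply/orP; left; lia.
case: Hyc => Q' [QE2 inQ'].
have noX : forall x, x \in Q (a + a) -> nth c1 w x != sx.
  move=> x hx.
  have [xlt _] := @mem_pushed w N Q Q0' Hst' (a + a) x (ltac:(lia)) hx.
  case: (ltnP x q) => hxq.
    have := @persist_back w N Q Hst' x q (a + a) hxq (ltac:(lia)) (ltac:(lia)) hx.
    rewrite Qq mem_iota => hx'; rewrite F0; last by lia.
    by apply: vsym_nx; apply/orP; right; lia.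
  rewrite F1; last by lia.
  by apply: vsym_nx; apply/orP; right; lia.
destruct L as [|L'].
  have HN' : a + a = N by rewrite -HN [size (Vword 0)]/= addn0.
  by move: QE2; rewrite HN' QN' => /(congr1 size); rewrite size_rcons.
have [t [ht s1 s2]] := final_part Hst' Ea HN F0 F1 F2 QE2 inQ' noX.
by apply: (Gx t 2 3 ht _ _ _ s1 s2); lia.
Qed.
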